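(* Let $q>2$, $n\ge 2$, and let $f:H(n,q)\to\mathbb{R}$ be an eigenfunction of $H(n,q)$ with eigenvalue $\lambda_1=n(q-1)-q$, i.e. $f\not\equiv0$ and $Af=\lambda_1 f$ where $A$ is the adjacency matrix of $H(n,q)$. Then $|S(f)|\ge 2(q-1)q^{n-2}$. Moreover, if $|S(f)|=2(q-1)q^{n-2}$, then there exist $i\ne j$ in $\{1,\dots,n\}$, $k,m\in\{0,\dots,q-1\}$ and a constant $c\ne0$ such that $f(x)=c$ for $x\in T_k(i,n)\setminus T_m(j,n)$, $f(x)=-c$ for $x\in T_m(j,n)\setminus T_k(i,n)$, and $f(x)=0$ otherwise.
   Context: The Hamming graph $H(n,q)$ has vertex set $\{0,1,\dots,q-1\}^n$, two words being adjacent iff they differ in exactly one coordinate; its adjacency eigenvalues are $\lambda_m=n(q-1)-qm$, $m=0,\dots,n$. For $f:H(n,q)\to\mathbb{R}$, its support is $S(f)=\{x: f(x)\ne 0\}$. $T_k(i,n)$ denotes the set of vertices of $H(n,q)$ whose $i$-th coordinate equals $k$. *)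

(* Defs.v *)
From HB Require Import structures.
From mathcomp Require Import all_boot all_order all_algebra.
Set Implicit Arguments. Unset Strict Implicit. Unset Printing Implicit Defensive.
Import Order.TTheory GRing.Theory Num.Theory.
Local Open Scope ring_scope.

(* Vertices of H(n,q): words of length n over {0,...,q-1}; coordinates are
   indexed by 'I_n (coordinate i+1 of the paper is index i here). *)
Definition hword (n q : nat) := {ffun 'I_n -> 'I_q}.

Definition hadj (n q : nat) (x y : hword n q) : bool :=
  #|[set i : 'I_n | x i != y i]| == 1%N.

Definition hA (R : nzRingType) (n q : nat) (f : hword n q -> R) (x : hword n q) : R :=
  \sum_(y : hword n q | hadj x y) f y.

Definition supp (R : nzRingType) (n q : nat) (f : hword n q -> R) : {set hword n q} :=
  [set x | f x != 0].

Definition T (n q : nat) (k : 'I_q) (i : 'I_n) : {set hword n q} :=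
  [set x : hword n q | x i == k].

Definition eigenfun (R : nzRingType) (n q : nat) (lam : R) (f : hword n q -> R) : Prop :=
  (exists x, f x != 0) /\ (forall x, hA f x = lam * f x).

(* Main.v *)
Require Import Defs.
From HB Require Import structures.
From mathcomp Require Import all_boot all_order all_algebra ring lra zify.
Import Order.TTheory GRing.Theory Num.Theory.
Local Open Scope ring_scope.

Set Implicit Arguments. Unset Strict Implicit. Unset Printing Implicit Defensive.


Section Upd.
Variables n q : nat.
Implicit Types x y : hword n q.

Definition upd x (i : 'I_n) (a : 'I_q) : hword n q :=
  [ffun j => if j == i then a else x j].

Lemma updE x i a j : upd x i a j = if j == i then a else x j.
Proof. by rewrite ffunE. Qed.

Lemma upd_at x i a : upd x i a i = a.
Proof. by rewrite updE eqxx. Qed.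

Lemma upd_neq x i a j : j != i -> upd x i a j = x j.
Proof. by rewrite updE => /negbTE ->. Qed.

Lemma upd_id x i : upd x i (x i) = x.
Proof. by apply/ffunP => j; rewrite updE; case: eqP => // ->. Qed.

Lemma upd_upd x i a b : upd (upd x i a) i b = upd x i b.
Proof. by apply/ffunP => j; rewrite !updE; case: eqP. Qed.

Lemma upd_comm x i j a b : i != j -> upd (upd x i a) j b = upd (upd x j b) i a.
Proof.
move=> ij; apply/ffunP => l; rewrite !updE.
case: (eqVneq l j) => [->|lj]; first by rewrite eq_sym (negbTE ij).
by case: (l == i).
Qed.

Lemma sum_upd (R : realFieldType) (G : 'I_n -> 'I_q -> R) x j a :
  \sum_(i < n) G i (upd x j a i) = G j a + (- G j (x j) + \sum_(i < n) G i (x i)).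
Proof.
rewrite (bigD1 j) //= [in RHS](bigD1 j) //= upd_at.
rewrite (eq_bigr (fun i => G i (x i))); last by move=> i /upd_neq ->.
by rewrite addKr.
Qed.

Lemma hA_upd (R : nzRingType) (f : hword n q -> R) x :
  hA f x = \sum_i \sum_(a | a != x i) f (upd x i a).
Proof.
rewrite /hA pair_big_dep /=.
pose h := fun p : 'I_n * 'I_q => upd x p.1 p.2.
pose A := [set p : 'I_n * 'I_q | p.2 != x p.1].
have inj : {in A &, injective h}.
  move=> [i a] [i' a']; rewrite !inE /h /= => ha ha' e.
  have ii : i = i'.
    apply/eqP; apply/negPn/negP => ne.
    have := congr1 (fun y => y i) e; rewrite /= upd_at upd_neq //.
    by move=> E; rewrite E eqxx in ha.
  subst i'; congr (_, _).
  by have := congr1 (fun y => y i) e; rewrite /= !upd_at.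
rewrite (eq_bigl (fun y => y \in h @: A)); last first.
  move=> y; apply/idP/idP.
  - rewrite /hadj => /cards1P [i Hi].
    have Hy : forall l, (x l != y l) = (l == i).
      by move=> l; have := congr1 (fun S : {set 'I_n} => l \in S) Hi; rewrite /= !inE.
    apply/imsetP; exists (i, y i); first by rewrite inE /= eq_sym Hy.
    apply/ffunP => l; rewrite /h /= updE.
    by case: (eqVneq l i) => [->//|li]; have := Hy l; rewrite (negbTE li) => /negbFE/eqP.
  - case/imsetP => [[i a]]; rewrite inE /= => ha ->.
    rewrite /hadj; apply/cards1P; exists i; apply/setP => l; rewrite !inE /h /= updE.
    by case: (eqVneq l i) => [->|]; rewrite ?eqxx // eq_sym.
rewrite big_imset //=; apply: eq_bigl => p; by rewrite inE.
Qed.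

End Upd.


Section B.
Variables n q : nat.
Implicit Types x y : hword n q.

Lemma hclosure (M : pred (hword n q)) b :
  M b -> (forall y j a, M y -> M (upd y j a)) -> forall x, M x.
Proof.
move=> Mb Mup x.
suff H : forall m, M [ffun j : 'I_n => if (j < m)%N then x j else b j].
  by have := H n; congr M; apply/ffunP => j; rewrite ffunE ltn_ord.
elim=> [|m IH].
  by congr M: Mb; apply/ffunP=> j; rewrite ffunE.
case: (ltnP m n) => [mn|nm].
  have -> : [ffun j : 'I_n => if (j < m.+1)%N then x j else b j] =
     upd [ffun j : 'I_n => if (j < m)%N then x j else b j] (Ordinal mn) (x (Ordinal mn)).
    apply/ffunP => j; rewrite updE !ffunE.
    case: (eqVneq j (Ordinal mn)) => [->|jm] /=; first by rewrite ltnSn.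
    have : (j : nat) != m by move: jm; apply: contra => /eqP e; apply/eqP/val_inj.
    by rewrite ltnS leq_eqVlt => /negbTE ->.
  exact: Mup.
congr M: IH; apply/ffunP => j; rewrite !ffunE.
have jm : (j < m)%N by apply: leq_trans (ltn_ord j) nm.
by rewrite jm ltnS ltnW.
Qed.

Lemma sum_const_ord (R : nzRingType) k (c : R) : \sum_(a < k) c = k%:R * c.
Proof. by rewrite sumr_const card_ord mulr_natl. Qed.

Lemma harmonic_const (R : realFieldType) (g : hword n q -> R) :
  (forall x, \sum_i \sum_a g (upd x i a) = (n * q)%:R * g x) ->
  forall x y, g x = g y.
Proof.
move=> H x.
have [xm _ Hm] := @arg_maxP _ _ _ x xpredT g isT.
suff K: forall y, g y = g xm by move=> y; rewrite !K.
suff K' : forall y, [pred y | g y == g xm] y by move=> y; apply/eqP; exact: K'.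
apply: (@hclosure _ xm); first by rewrite /= eqxx.
move=> y j a; rewrite /= => /eqP Hy; apply/eqP.
have S : \sum_i \sum_a (g y - g (upd y i a)) = 0.
  rewrite (eq_bigr (fun i => \sum_(a < q) g y - \sum_a g (upd y i a))); last by move=> i _; rewrite sumrB.
  rewrite sumrB H !sum_const_ord natrM mulrA.
  by rewrite subrr.
have ge0 : forall i, true -> 0 <= \sum_a (g y - g (upd y i a)).
  by move=> i _; apply: sumr_ge0 => b _; rewrite subr_ge0 Hy; apply: Hm.
have Sj := @psumr_eq0P _ _ _ _ ge0 S j isT.
have ge0' : forall b, true -> 0 <= g y - g (upd y j b).
  by move=> b _; rewrite subr_ge0 Hy; apply: Hm.
have := @psumr_eq0P _ _ _ _ ge0' Sj a isT.
by move/eqP; rewrite subr_eq0 => /eqP <-; rewrite Hy.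
Qed.

End B.


Section C.
Variables (n q : nat) (R : realFieldType) (f : hword n q -> R).
Hypothesis hq : (0 < q)%N.
Hypothesis hf : forall x, hA f x = ((n * (q - 1))%:R - q%:R) * f x.
Implicit Types x y : hword n q.

Let mu : R := (n * q)%:R - q%:R.

Lemma NSf x : \sum_i \sum_a f (upd x i a) = mu * f x.
Proof.
rewrite (eq_bigr (fun i => f x + \sum_(a | a != x i) f (upd x i a))); last first.
  by move=> i _; rewrite (bigD1 (x i)) //= upd_id.
rewrite big_split /= -hA_upd hf sum_const_ord /mu natrM natrB // natrM.
ring.
Qed.

Lemma stepB i k l y y' :
  f (upd y i k) - f (upd y i l) = f (upd y' i k) - f (upd y' i l).
Proof.
pose D := fun x => f (upd x i k) - f (upd x i l).
apply: (@harmonic_const n q R D) => x.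
rewrite (bigD1 i) //=.
rewrite (eq_bigr (fun _ => D x)); last by move=> a _; rewrite /D !upd_upd.
rewrite sum_const_ord.
have T : forall z, \sum_(j | j != i) \sum_a f (upd z j a)
                   = mu * f z - \sum_a f (upd z i a).
  by move=> z; rewrite -NSf [X in _ = X - _](bigD1 i) //= addrAC subrr add0r.
rewrite (eq_bigr (fun j => \sum_a f (upd (upd x i k) j a) - \sum_a f (upd (upd x i l) j a))); last first.
  move=> j ji; rewrite -sumrB; apply: eq_bigr => a _.
  by rewrite /D !(@upd_comm _ _ _ j i) // eq_sym.
rewrite sumrB !T.
have U : forall z c, \sum_a f (upd (upd z i c) i a) = \sum_a f (upd z i a).
  by move=> z c; apply: eq_bigr => a _; rewrite upd_upd.
rewrite !U.
rewrite /D /mu natrM; ring.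
Qed.

Lemma represent (x0 : hword n q) :
  exists g : 'I_n -> 'I_q -> R,
    (forall i, \sum_a g i a = 0) /\ forall x, f x = \sum_i g i (x i).
Proof.
pose e i a := f (upd x0 i a) - f x0.
have Hrep : forall x, f x = f x0 + \sum_i e i (x i).
  suff K : forall x, (fun y => f y == f x0 + \sum_i e i (y i)) x by move=> x; apply/eqP/K.
  apply: (@hclosure n q (fun y => f y == f x0 + \sum_i e i (y i)) x0) => /=.
    by rewrite big1 ?addr0 // => i _; rewrite /e upd_id subrr.
  move=> y j a /eqP Hy; apply/eqP.
  rewrite sum_upd.
  have -> : f (upd y j a) = f y + (f (upd y j a) - f (upd y j (y j))) by rewrite upd_id addrC subrK.
  rewrite (stepB j a (y j) y x0) Hy /e.
  have L : forall F S A B : R, F + S + (A - B) = F + ((A - F) + (-(B - F) + S)) by move=> *; ring.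
  exact: L.
pose E i := \sum_a e i a.
have qn0 : (q%:R : R) != 0 by rewrite pnatr_eq0 -lt0n.
pose g i a := e i a - E i / q%:R.
pose K := f x0 + \sum_i E i / q%:R.
have Hg : forall x, f x = K + \sum_i g i (x i).
  move=> x; rewrite Hrep /K /g [in RHS]sumrB.
  have L : forall F S T : R, F + S = F + T + (S - T) by move=> *; ring.
  exact: L.
have Hsum : forall i, \sum_a g i a = 0.
  move=> i; rewrite sumrB sum_const_ord /E mulrC divfK //; exact: subrr.
have K0 : K = 0.
  have H1 := NSf x0.
  have H2 : forall j, \sum_a f (upd x0 j a) = q%:R * (f x0 - g j (x0 j)).
    move=> j; rewrite (eq_bigr (fun a => f x0 - g j (x0 j) + g j a)); last first.
      by move=> a _; rewrite !Hg sum_upd; ring.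
    by rewrite big_split /= Hsum sum_const_ord addr0.
  rewrite (eq_bigr _ (fun j _ => H2 j)) -mulr_sumr sumrB sum_const_ord in H1.
  have H3 : \sum_i g i (x0 i) = f x0 - K by rewrite Hg; ring.
  rewrite H3 /mu natrM in H1.
  have L : forall Q N F K : R, Q * (N * F - (F - K)) = (N * Q - Q) * F -> Q * K = 0.
    by move=> Q N F K0 H; rewrite -[Q * K0](subr0) -[X in _ - X](subrr ((N * Q - Q) * F)) -{1}H; ring.
  have := L _ _ _ _ H1.
  by move/eqP; rewrite mulf_eq0 (negbTE qn0) /= => /eqP.
exists g; split => // x; by rewrite Hg K0 add0r.
Qed.

End C.


Section Grid.
Variables (R : realFieldType) (q : nat).
Hypothesis hq : (2 < q)%N.

Definition pat (k m : 'I_q) (c : R) (a b : 'I_q) : R :=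
  if (a == k) && (b != m) then c else if (b == m) && (a != k) then - c else 0.

Lemma sum_ge_eq (I : finType) (P : pred I) (F G : I -> nat) :
  (forall i, P i -> (G i <= F i)%N) -> \sum_(i | P i) F i = \sum_(i | P i) G i ->
  forall i, P i -> F i = G i.
Proof.
move=> H E i Pi; apply/eqP; rewrite eqn_leq H // andbT leqNgt; apply/negP => lt.
rewrite (bigD1 i) //= [X in _ = X](bigD1 i) //= in E.
move: E; apply/eqP; rewrite neq_ltn; apply/orP; right.
rewrite -addSn; apply: leq_add => //; apply: leq_sum => j /andP [] /H //.
Qed.

Lemma avoid2 (k1 k2 : 'I_q) : exists a, (a != k1) && (a != k2).
Proof.
case: (pickP (fun a => (a != k1) && (a != k2))) => [a Ha|H]; first by exists a.
have : [set: 'I_q] \subset [set k1; k2].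
  apply/subsetP => a _; rewrite !inE; have := H a; by case: (a == k1); case: (a == k2).
move/subset_leq_card; rewrite cardsT card_ord cards2.
by case: (k1 != k2) => /=; move=> le; move: hq; rewrite ltnNge (leq_trans le) //.
Qed.

Lemma pat_C (u v : 'I_q -> R) C1 C2 k1 m1 c1 k2 m2 c2 :
  (forall a b, u a + v b + C1 = pat k1 m1 c1 a b) ->
  (forall a b, u a + v b + C2 = pat k2 m2 c2 a b) -> C1 = C2.
Proof.
move=> H1 H2; have [a /andP [a1 a2]] := avoid2 k1 k2.
have [b /andP [b1 b2]] := avoid2 m1 m2.
have := H1 a b; have := H2 a b; rewrite /pat (negbTE a1) (negbTE a2) (negbTE b1) (negbTE b2) /=.
by move=> e2 e1; apply: (@addrI _ (u a + v b)); rewrite e1 e2.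
Qed.

Variables (u v : 'I_q -> R) (C : R).
Let Z a := [set b | u a + v b + C == 0].

Lemma grid :
  (exists a a', u a != u a') -> (exists b b', v b != v b') ->
  (2 * (q - 1) <= \sum_a #|~: Z a|)%N /\ (
  (\sum_a #|~: Z a| = 2 * (q - 1))%N ->
     exists k m c, c != 0 /\ forall a b, u a + v b + C = pat k m c a b).
Proof.
move=> [a1 [a2 ua]] [b1 [b2 vb]].
have rz : forall a, (#|~: Z a| + #|Z a| = q)%N by move=> a; rewrite addnC cardsC card_ord.
have r1 : forall a, (0 < #|~: Z a|)%N.
  move=> a; apply/card_gt0P.
  case: (eqVneq (u a + v b1 + C) 0) => [e|n0]; last by exists b1; rewrite !inE n0.
  exists b2; rewrite !inE; apply: contra vb => /eqP e2.
  by apply/eqP/(@addIr _ C)/(@addrI _ (u a)); rewrite !addrA e e2.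
have disj : forall a a', u a != u a' -> (#|Z a| + #|Z a'| <= q)%N.
  move=> a a' ne; rewrite -cardsUI.
  have -> : Z a :&: Z a' = set0.
    apply/setP => b; rewrite !inE; apply/negP => /andP [/eqP e /eqP e'].
    move: ne; rewrite -(subr_eq0 (u a)); apply/negP; rewrite negbK.
    apply/eqP; have : u a + v b + C - (u a' + v b + C) = 0 by rewrite e e' subrr.
    move=> <-; ring.
  by rewrite cards0 addn0; apply: leq_trans (max_card _) _; rewrite card_ord.
case: (boolP [forall a, #|Z a| <= q - 2]%N) => [/forallP small|].
  have big2 : (2 * q <= \sum_a #|~: Z a|)%N.
    have -> : (2 * q = \sum_(a < q) 2)%N by rewrite sum_nat_const card_ord mulnC.
    apply: leq_sum => a _; have := rz a; have := small a; lia.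
  split; first by apply: leq_trans big2; lia.
  by move=> E; move: big2; rewrite E; lia.
rewrite negb_forall => /existsP [a0]; rewrite -ltnNge => za0.
have za0' : (#|Z a0| = q - 1)%N by have := rz a0; have := r1 a0; lia.
have [k uk] : exists k, u k != u a0.
  case: (eqVneq (u a1) (u a0)) => e; last by exists a1.
  by exists a2; rewrite -e eq_sym.
have zk : (#|Z k| <= 1)%N by have := disj _ _ uk; lia.
rewrite (bigD1 k) //=.
set S := (\sum_(i < q | i != k) _)%N.
have e1 : (\sum_(a < q | a != k) 1 = q - 1)%N by rewrite sum_nat_const muln1 cardC1 card_ord subn1.
have rest : (q - 1 <= S)%N.
  by rewrite -e1 /S; apply: leq_sum => a _; apply: r1.
have rk : (q - 1 <= #|~: Z k|)%N by have := rz k; lia.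
have raS : S = (q - 1)%N -> forall a, a != k -> #|~: Z a| = 1%N.
  move=> SE; apply: (@sum_ge_eq _ (fun a => a != k) (fun a => #|~: Z a|) (fun=> 1%N)).
    by move=> a _; apply: r1.
  apply: (etrans (y := S)); first by [].
  by rewrite SE; exact: esym e1.
clearbody S.
move: rk raS (rz k); set rK := #|~: Z k| => rk raS rzk.
clearbody rK.
split; first by lia.
move=> E.
have zk1 : #|Z k| = 1%N by lia.
have ra := raS ltac:(lia).
have za : forall a, a != k -> #|Z a| = (q - 1)%N by move=> a /ra; have := rz a; lia.
have ua0 : forall a, a != k -> u a = u a0.
  move=> a ak; apply/eqP; apply/negPn/negP => ne.
  have := disj _ _ ne; rewrite za // za0'; lia.
have a0k : a0 != k by apply: contra uk => /eqP ->.
have [m Zm] : exists m, Z k = [set m] by apply/cards1P/eqP.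
have Za0 : Z a0 = [set~ m].
  apply/eqP; rewrite eqEcard cardsC1 card_ord za0' subn1 leqnn andbT.
  apply/subsetP => b; rewrite !inE => /eqP e; apply/eqP => bm.
  have : m \in Z k by rewrite Zm set11.
  rewrite inE -bm => /eqP e'; move/eqP: uk; apply.
  by apply: (@addIr _ (v b + C)); rewrite !addrA e e'.
have F0 : forall b, b != m -> u a0 + v b + C = 0.
  move=> b bm; apply/eqP; have : b \in Z a0 by rewrite Za0 !inE.
  by rewrite inE.
have Fk : u k + v m + C = 0.
  apply/eqP; have : m \in Z k by rewrite Zm set11.
  by rewrite inE.
exists k, m, (u k - u a0); split; first by rewrite subr_eq0.
move=> a b; rewrite /pat.
case: (eqVneq a k) => [->|ak]; case: (eqVneq b m) => [->|bm] /=.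
- by rewrite Fk.
- by rewrite -[RHS]add0r -(F0 b bm); ring.
- rewrite (ua0 a ak).
  have L : forall A B V C0 : R, B + V + C0 = 0 -> A + V + C0 = - (B - A).
    move=> A B V C0 H; have -> : A + V + C0 = (B + V + C0) - (B - A) by ring.
    by rewrite H add0r.
  exact: L Fk.
- by rewrite (ua0 a ak) F0.
Qed.

End Grid.


Lemma sum_nat_card (T : finType) (P : pred T) :
  (\sum_x (P x : nat))%N = #|[set x | P x]|.
Proof.
rewrite -sum1_card [RHS]big_mkcond /=; apply: eq_bigr => x _; rewrite inE; by case: (P x).
Qed.

Lemma fiber n q (phi : hword n q -> nat) i :
  (\sum_x \sum_a phi (upd x i a) = q * \sum_x phi x)%N.
Proof.
pose s := fun p : hword n q * 'I_q => (upd p.1 i p.2, p.1 i).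
have sK : involutive s by case=> x a; rewrite /s /= upd_upd upd_at upd_id.
rewrite pair_big /= (reindex_inj (inv_inj sK)) /=.
rewrite (eq_bigr (fun p => phi p.1)); last by case=> x a _; rewrite /s /= upd_upd upd_id.
rewrite -(pair_big xpredT xpredT (fun x (a : 'I_q) => phi x)) /= big_distrr /=.
by apply: eq_bigr => x _; rewrite sum_nat_const card_ord.
Qed.

Lemma nonconst (R : realFieldType) q (u : 'I_q -> R) a :
  \sum_b u b = 0 -> u a != 0 -> exists a', u a' != u a.
Proof.
move=> S ua; case: (pickP (fun a' => u a' != u a)) => [a' H|H]; first by exists a'.
exfalso; move: S; rewrite (eq_bigr (fun=> u a)); last first.
  by move=> b _; apply/eqP; have := H b; move/negbFE.
rewrite sum_const_ord; move/eqP; rewrite mulf_eq0 (negbTE ua) orbF pnatr_eq0.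
by move/eqP=> q0; have := ltn_ord a; move: (nat_of_ord a); rewrite q0.
Qed.

Lemma card_hword n q : #|hword n q| = (q ^ n)%N.
Proof. by rewrite card_ffun !card_ord. Qed.

Unset Implicit Arguments. Set Strict Implicit. Set Printing Implicit Defensive.


Theorem theorem3 (R : realFieldType) (n q : nat) (hq : (2 < q)%N) (hn : (2 <= n)%N)
    (f : hword n q -> R)
    (hf : eigenfun ((n * (q - 1))%:R - q%:R) f) :
  (2 * (q - 1) * q ^ (n - 2) <= #|supp f|)%N /\
  (#|supp f| = (2 * (q - 1) * q ^ (n - 2))%N ->
   exists (i j : 'I_n) (k m : 'I_q) (c : R),
     [/\ i != j, c != 0 &
       forall x : hword n q,
         f x = (if x \in T k i :\: T m j then c
                else if x \in T m j :\: T k i then - c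
                else 0)]).
Proof.
case: hf => [[x0 fx0] hA'].
have q0 : (0 < q)%N by apply: ltnW; apply: ltn_trans hq.
have [g [Hsum Hg]] := @represent n q R f q0 hA' x0.
have qn : (q ^ n = q ^ (n - 2) * q * q)%N by rewrite -!expnSr -subSn // -subSn ?subSS ?subn0 // ltnW.
have Pw0 : (0 < q ^ (n - 2))%N by rewrite expn_gt0 q0.
have suppE : #|supp f| = (\sum_x (f x != 0%R : nat))%N by rewrite sum_nat_card.
have [i gi] : exists i, g i (x0 i) != 0.
  case: (pickP (fun l => g l (x0 l) != 0)) => [l H|H]; first by exists l.
  by move: fx0; rewrite Hg big1 ?eqxx // => l _; apply/eqP; have := H l; move/negbFE.
have [a' ua'] := nonconst (Hsum i) gi.
case: (pickP (fun j => (j != i) && [exists b, g j b != 0])) => [j /andP [ji /existsP [b0 gj]]|H].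
  have [b' vb'] := nonconst (Hsum j) gj.
  pose Cx x := f x - g i (x i) - g j (x j).
  have ij : i != j by rewrite eq_sym.
  have HF : forall x a b, f (upd (upd x i a) j b) = g i a + g j b + Cx x.
    move=> x a b; rewrite Hg sum_upd (@upd_neq _ _ x i a j ji) sum_upd -Hg /Cx.
    have L : forall (A B X1 X2 F : R),
        B + (- X2 + (A + (- X1 + F))) = A + B + (F - X1 - X2) by move=> *; ring.
    exact: L.
  pose fc x := (\sum_a #|~: [set b | (g i a + g j b + Cx x == 0)%R]|)%N.
  have cnt : (q * (q * #|supp f|) = \sum_x fc x)%N.
    rewrite suppE -(fiber _ j) -(fiber (fun y => \sum_b (f (upd y j b) != 0%R : nat))%N i).
    apply: eq_bigr => x _; apply: eq_bigr => a _; rewrite sum_nat_card.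
    by apply: eq_card => b; rewrite !inE HF.
  have hu : exists a1 a2, g i a1 != g i a2 by exists a', (x0 i).
  have hv : exists a1 a2, g j a1 != g j a2 by exists b', b0.
  have G := fun x => @grid R q hq (g i) (g j) (Cx x) hu hv.
  have lb : (q ^ n * (2 * (q - 1)) <= q * (q * #|supp f|))%N.
    have -> : (q ^ n * (2 * (q - 1)) = \sum_(x : hword n q) 2 * (q - 1))%N.
      by rewrite sum_nat_const card_hword.
    rewrite cnt; apply: leq_sum => x _; have [h _] := G x; exact: h.
  split.
    rewrite -(leq_pmul2l q0) -(leq_pmul2l q0); apply: leq_trans lb.
    by apply/eq_leq; rewrite qn; ring.
  move=> E.
  have allx : forall x, fc x = (2 * (q - 1))%N.
    move=> x; apply: (@sum_ge_eq _ xpredT fc (fun _ => 2 * (q - 1))%N) => //.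
      by move=> y _; have [h _] := G y; exact: h.
    rewrite -cnt E sum_nat_const card_hword qn; ring.
  have Hp := fun x => (G x).2 (allx x).
  have Cconst : forall x y, Cx x = Cx y.
    move=> x y; have [k1 [m1 [c1 [_ H1]]]] := Hp x; have [k2 [m2 [c2 [_ H2]]]] := Hp y.
    exact: (pat_C hq H1 H2).
  have gz : forall l, l != i -> l != j -> forall a, g l a = 0.
    move=> l li lj a; apply/eqP/negPn/negP => gl.
    have [a2 ga2] := nonconst (Hsum l) gl.
    have CE := Cconst (upd x0 l a) (upd x0 l a2).
    move: CE; rewrite /Cx !(@upd_neq _ _ x0 l _ i) 1?eq_sym // !(@upd_neq _ _ x0 l _ j) 1?eq_sym //.
    rewrite !Hg !sum_upd => CE.
    have L : forall A A2 X S I J : R,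
        A + (- X + S) - I - J = A2 + (- X + S) - I - J -> A2 = A.
      move=> A A2 X S I J H; apply/eqP; rewrite -subr_eq0; apply/eqP.
      have -> : A2 - A = (A2 + (- X + S) - I - J) - (A + (- X + S) - I - J) by ring.
      by rewrite H subrr.
    by move/eqP: ga2; apply; exact: L CE.
  have fij : forall x, f x = g i (x i) + g j (x j).
    move=> x; rewrite Hg (bigD1 i) //= (bigD1 j) //= big1 ?addr0 ?addrA //.
    by move=> l /andP [li lj]; exact: gz.
  have C0 : Cx x0 = 0 by rewrite /Cx fij; ring.
  have [k [m [c [c0 Hpat]]]] := Hp x0.
  exists i, j, k, m, c; split => // x.
  rewrite fij; have := Hpat (x i) (x j); rewrite C0 addr0 => ->.
  rewrite /pat /T !inE.
  by case: (x i == k); case: (x j == m).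
have fi : forall x, f x = g i (x i).
  move=> x; rewrite Hg (bigD1 i) //= big1 ?addr0 // => l li.
  have := H l; rewrite li /= => /negbT; rewrite negb_exists => /forallP /(_ (x l)).
  by rewrite negbK => /eqP.
set P2 := #|[set a | g i a != 0]|.
have P22 : (2 <= P2)%N.
  have [a2 a2ne] : exists a2, (a2 != x0 i) && (g i a2 != 0).
    case: (pickP (fun a2 => (a2 != x0 i) && (g i a2 != 0))) => [a2 Ha|Ha]; first by exists a2.
    move: (Hsum i); rewrite (bigD1 (x0 i)) //= big1 ?addr0; first by move/eqP; rewrite (negbTE gi).
    by move=> a an; apply/eqP; have := Ha a; rewrite an /= => /negbT; rewrite negbK.
  case/andP: a2ne => a2x a2g.
  have : [set a2; x0 i] \subset [set a | g i a != 0].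
    by apply/subsetP => a; rewrite !inE => /orP [] /eqP ->.
  by move/subset_leq_card; rewrite cards2 a2x.
have cnt : (q * #|supp f| = q ^ n * P2)%N.
  rewrite suppE -(fiber _ i).
  rewrite (eq_bigr (fun _ => P2)); last first.
    by move=> x _; rewrite (eq_bigr (fun a => (g i a != 0%R : nat))) ?sum_nat_card // => a _; rewrite fi upd_at.
  by rewrite sum_nat_const card_hword.
have Sx : (#|supp f| = q ^ (n - 2) * q * P2)%N.
  by apply/eqP; rewrite -(eqn_pmul2l q0) cnt qn; apply/eqP; ring.
have strict : (2 * (q - 1) * q ^ (n - 2) < #|supp f|)%N.
  rewrite Sx; nia.
split; first by apply: ltnW.
by move=> E; rewrite E ltnn in strict.
Qed.
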